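(* Let $\mathcal{L}$ be a constraint language, $\mathcal{R}(\mathcal{L})$ a relational extension of it with set of relation symbols $\mathcal{R}$, and $\mathcal{P}_F$ a quantitative definite clause specification in $\mathcal{R}(\mathcal{L})$. Let $\langle \mathcal{A}_0, \mathcal{A}_1, \mathcal{A}_2, \ldots\rangle$ be a $\mathcal{P}_F$-chain (of $\mathcal{R}(\mathcal{L})$-interpretations extending some $\mathcal{L}$-interpretation $\mathcal{I}$). Then for each $n$-ary relation symbol $r\in\mathcal{R}$, each variable assignment $\alpha\in\mathsf{ASS}$ and each $\vec{x}\in\mathsf{VAR}^n$, there exists some $m\in\mathbb{N}$ such that $$\mu\big(\alpha(\vec{x});\, r^{\bigcup_{i\ge 0}\mathcal{A}_i}\big)=\mu\big(\alpha(\vec{x});\, r^{\mathcal{A}_m}\big).$$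
   Context: A constraint language $\mathcal{L}$ consists of: a signature; a decidable infinite set $\mathsf{VAR}$ of variables; a decidable set of $\mathcal{L}$-constraints; a computable function $\mathsf{V}$ assigning to each constraint $\phi$ a finite set $\mathsf{V}(\phi)$ of variables; a nonempty set of $\mathcal{L}$-interpretations, each $\mathcal{I}$ having a nonempty domain $\mathcal{D}$ and set $\mathsf{ASS}$ of variable assignments $\mathsf{VAR}\to\mathcal{D}$; and for each interpretation $\mathcal{I}$ a map sending each constraint $\phi$ to a set $[\![\phi]\!]^{\mathcal{I}}\subseteq\mathsf{ASS}$ (its solutions), such that if $\alpha\in[\![\phi]\!]^{\mathcal{I}}$ and $\beta$ agrees with $\alpha$ on $\mathsf{V}(\phi)$ then $\beta\in[\![\phi]\!]^{\mathcal{I}}$. The extension $\mathcal{R}(\mathcal{L})$ adds a decidable set $\mathcal{R}$ of relation symbols with arities; an atom is $r(\vec{x})$ with $r\in\mathcal{R}$ of arity $n$ and $\vec{x}$ an $n$-tuple of pairwise distinct variables. A quantitative definite clause specification $\mathcal{P}_F$ in $\mathcal{R}(\mathcal{L})$ is a finite set of quantitative definite clauses $r(\vec{x})\leftarrow_f \phi \,\&\, q_1(\vec{x}_1)\,\&\,\ldots\,\&\, q_k(\vec{x}_k)$, where $r(\vec x),q_j(\vec x_j)$ are atoms, $\phi$ is an $\mathcal{L}$-constraint, $k\ge 0$ and $f\in(0,1]$ (the factor). An $\mathcal{R}(\mathcal{L})$-interpretation $\mathcal{A}$ extending an $\mathcal{L}$-interpretation $\mathcal{I}$ has the same domain $\mathcal{D}$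 and assigns to each $n$-ary $r\in\mathcal{R}$ a fuzzy subset of $\mathcal{D}^n$, i.e. a total membership function $\mu(\_\,; r^{\mathcal{A}}):\mathcal{D}^n\to[0,1]$; for $\mathcal{L}$-constraints $[\![\phi]\!]^{\mathcal{A}}=[\![\phi]\!]^{\mathcal{I}}$. Interpretations extending the same $\mathcal{I}$ are base equivalent. For a set $X$ of base equivalent interpretations, $\bigcup X$ is the interpretation with $\mu(\alpha(\vec x); r^{\bigcup X})=\sup\{\mu(\alpha(\vec x); r^{\mathcal{A}'})\mid \mathcal{A}'\in X\}$ for all $r,\alpha,\vec x$ (with $\sup\emptyset=0$). A renaming is a bijection $\mathsf{VAR}\to\mathsf{VAR}$ that is the identity except at finitely many variables; a variant of a clause is the clause obtained by simultaneously replacing each variable $X$ by $\rho(X)$ for some renaming $\rho$. Given $\mathcal{P}_F$ and an $\mathcal{L}$-interpretation $\mathcal{I}$, a sequence $\langle\mathcal{A}_0,\mathcal{A}_1,\ldots\rangle$ of $\mathcal{R}(\mathcal{L})$-interpretations extending $\mathcal{I}$ is a $\mathcal{P}_F$-chain iff for every $n$-ary $r\in\mathcal{R}$, $\alpha\in\mathsf{ASS}$, $\vec{x}\in\mathsf{VAR}^n$: $\mu(\alpha(\vec x); r^{\mathcal{A}_0})=0$ and $\mu(\alpha(\vec x); r^{\mathcal{A}_{i+1}})=\max\{ f\times\min\{\mu(\alpha(\vec x_j); q_j^{\mathcal{A}_i})\mid 1\le j\le k\} \mid r(\vec x)\leftarrow_f\phi\,\&\,q_1(\vec x_1)\,\&\ldots\&\,q_k(\vec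 x_k)$ is a variant of a clause in $\mathcal{P}_F$ and $\alpha\in[\![\phi]\!]^{\mathcal{A}_i}\}$, with $\min\emptyset=1$ (and the maximum over an empty set taken as $0$). *)

(* Defs.v *)
From Stdlib Require List.
From HB Require Import structures.
From mathcomp Require Import all_boot all_order all_algebra.
From mathcomp Require Import boolp classical_sets reals.
Set Implicit Arguments. Unset Strict Implicit. Unset Printing Implicit Defensive.
Import Order.TTheory GRing.Theory Num.Theory.
Local Open Scope ring_scope.
Local Open Scope classical_set_scope.

Section QDC.
Variables (R : realType) (VAR : eqType) (Constr : Type) (Rel : Type)
          (arity : Rel -> nat).

Definition atom := {r : Rel & (arity r).-tuple VAR}.
Definition is_atom (a : atom) : bool := uniq (tagged a).

(* A quantitative definite clause  r(x) <-_f phi & q_1(x_1) & ... & q_k(x_k). *)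
Record qclause := QClause {
  hd_rel : Rel;
  hd_args : (arity hd_rel).-tuple VAR;
  cl_constr : Constr;
  cl_factor : R;
  cl_body : seq atom }.

Definition wf_qclause (c : qclause) : Prop :=
  [/\ uniq (hd_args c), 0 < cl_factor c <= 1 & all is_atom (cl_body c)].

Definition qdc_spec (P : seq qclause) : Prop := forall c, List.In c P -> wf_qclause c.

Definition renaming (rho : VAR -> VAR) : Prop :=
  bijective rho /\ exists s : seq VAR, forall v, v \notin s -> rho v = v.

(* the variant of a clause under a renaming; [crename] is the (simultaneous)
   variable renaming on L-constraints *)
Definition rename_atom (rho : VAR -> VAR) (a : atom) : atom :=
  Tagged (fun r => (arity r).-tuple VAR) (map_tuple rho (tagged a)).

Definition rename_clause (crename : (VAR -> VAR) -> Constr -> Constr)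
  (rho : VAR -> VAR) (c : qclause) : qclause :=
  @QClause (hd_rel c) (map_tuple rho (hd_args c)) (crename rho (cl_constr c))
    (cl_factor c) [seq rename_atom rho a | a <- cl_body c].

(* Membership functions of an R(L)-interpretation over domain D. *)
Definition interp (D : Type) := forall r : Rel, (arity r).-tuple D -> R.

Definition fuzzy_interp (D : Type) (A : interp D) : Prop :=
  forall r d, 0 <= A r d <= 1.

(* min over a list, with min of the empty list = 1 *)
Definition lmin (s : seq R) : R := foldr Num.min 1 s.

Definition body_val (D : Type) (A : interp D) (alpha : VAR -> D) (b : seq atom) : R :=
  lmin [seq A (tag a) (map_tuple alpha (tagged a)) | a <- b].

(* the set whose maximum defines mu(alpha(x); r^{A_{i+1}}) *)
Definition step_vals (D : Type) (P : seq qclause)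
  (crename : (VAR -> VAR) -> Constr -> Constr)
  (sem : Constr -> (VAR -> D) -> Prop)
  (A : interp D) (r : Rel) (alpha : VAR -> D) (x : (arity r).-tuple VAR) : set R :=
  [set v | exists c rho, List.In c P /\ renaming rho /\
     let c' := rename_clause crename rho c in
     [/\ hd_rel c' = r, val (hd_args c') = val x, sem (cl_constr c') alpha
       & v = cl_factor c' * body_val A alpha (cl_body c')]].

(* v is the maximum of S, with the maximum of the empty set taken as 0 *)
Definition is_max (S : set R) (v : R) : Prop :=
  (S = set0 /\ v = 0) \/ (S v /\ forall w, S w -> w <= v).

(* P_F-chain (all A_i extend the same L-interpretation: same domain D and
   same constraint semantics [sem]) *)
Definition is_chain (D : Type) (P : seq qclause)
  (crename : (VAR -> VAR) -> Constr -> Constr)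
  (sem : Constr -> (VAR -> D) -> Prop) (A : nat -> interp D) : Prop :=
  (forall r (alpha : VAR -> D) (x : (arity r).-tuple VAR),
      A 0%N r (map_tuple alpha x) = 0) /\
  (forall i r (alpha : VAR -> D) (x : (arity r).-tuple VAR), uniq x ->
      is_max (step_vals P crename sem (A i) alpha x)
             (A i.+1 r (map_tuple alpha x))).

Definition union_interp (D : Type) (A : nat -> interp D) : interp D :=
  fun r d => sup [set A i r d | i in [set: nat]].

End QDC.

Arguments union_interp [R Rel arity D] A r d.

(* Main.v *)
Require Import Defs.
From HB Require Import structures.
From mathcomp Require Import all_boot all_order all_algebra.
From mathcomp Require Import boolp classical_sets reals.
From mathcomp Require Import lra.
Import Order.TTheory GRing.Theory Num.Theory.
Local Open Scope ring_scope.
Local Open Scope classical_set_scope.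

Set Implicit Arguments. Unset Strict Implicit.
Section Aux.
Variable R : realType.

Definition inF (fs : seq R) (v : R) : Prop :=
  v = 0 \/ exists l : seq R, all (mem fs) l /\ v = \prod_(f <- l) f.

Fixpoint LN (fs : seq R) (N : nat) : seq R :=
  if N is N'.+1 then LN fs N' ++ [seq f * v | f <- fs, v <- LN fs N'] else [:: 1].

Lemma LN_mem fs N l : all (mem fs) l -> (size l <= N)%N ->
  \prod_(f <- l) f \in LN fs N.
Proof.
elim: N l => [|N IH] [|f l] //=; first by rewrite big_nil inE.
- by move=> _ _; rewrite mem_cat (IH [::]).
- move=> /andP[hf hl] hs; rewrite mem_cat big_cons; apply/orP; right.
  by apply: allpairs_f => //; apply: IH.
Qed.

Lemma exists_t (fs : seq R) : all (fun f => (0 < f) && (f < 1)) fs ->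
  exists t : R, 0 < t /\ forall f, f \in fs -> f * (1 + t) <= 1.
Proof.
elim: fs => [|f fs IH] /=; first by exists 1; split.
move=> /andP[/andP[f0 f1] Hall]; have [t [t0 Ht]] := IH Hall.
exists (Num.min t ((1 - f) / f)); split.
  by rewrite lt_min t0 /= divr_gt0 // subr_gt0.
move=> g; rewrite inE => /orP[/eqP->|hg].
  have : Num.min t ((1 - f) / f) <= (1 - f) / f by rewrite ge_min lexx orbT.
  rewrite ler_pdivlMr // => h.
  rewrite mulrDr mulr1 mulrC; lra.
have := Ht g hg; have : Num.min t ((1 - f) / f) <= t by rewrite ge_min lexx.
have /andP[g0 _] := allP Hall g hg.
set m := Num.min _ _ => hm hg1.
apply: le_trans hg1; rewrite ler_pM2l // lerD2l //.
Qed.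

Lemma prod_bound (fs : seq R) t : 0 < t -> all (fun f => (0 < f) && (f < 1)) fs ->
  (forall f, f \in fs -> f * (1 + t) <= 1) ->
  forall l, all (mem fs) l -> 0 <= \prod_(f <- l) f /\
     \prod_(f <- l) f * (1 + (size l)%:R * t) <= 1.
Proof.
move=> t0 Hall Ht; elim=> [|f l IH] /=; first by rewrite big_nil mul0r addr0 mul1r.
move=> /andP[hf /IH[p0 p1]]; rewrite big_cons.
have /andP[f0 f1] := allP Hall f hf; have := Ht f hf.
set p := \prod_(_ <- _) _ in p0 p1 *; rewrite -nat1r.
have hk : 0 <= (size l)%:R :> R by [].
set k := (size l)%:R in p1 hk * => hft.
split; first by rewrite mulr_ge0 // ltW.
have hpkt : 0 <= p * k * t by rewrite !mulr_ge0 // ltW.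
have hp1 : p <= 1.
  by move: p1; rewrite mulrDr mulr1 mulrA; lra.
have hX : p * (1 + (1 + k) * t) <= 1 + t.
  have : p * t <= t by rewrite ler_piMl // ltW.
  by move: p1; rewrite !mulrDr !mulr1 mulrDl mul1r mulrDr !mulrA; lra.
apply: le_trans hft; rewrite -mulrA ler_pM2l //.
Qed.

Lemma list_max (s : seq R) x : exists2 m, m \in x :: s & forall w, w \in x :: s -> w <= m.
Proof.
elim: s x => [|y s IH] x; first by exists x; rewrite ?inE // => w; rewrite inE => /eqP->.
have [m hm1 hm2] := IH y.
case: (leP x m) => hxm.
  exists m; first by rewrite inE hm1 orbT.
  by move=> w; rewrite inE => /orP[/eqP->//|]; apply: hm2.
exists x; first by rewrite inE eqxx.
move=> w; rewrite inE => /orP[/eqP->//|/hm2 h]; exact: (le_trans h (ltW hxm)).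
Qed.

Lemma sup_attained (fs : seq R) (S : set R) :
  all (fun f => (0 < f) && (f < 1)) fs -> S !=set0 -> (forall v, S v -> inF fs v) ->
  exists2 v, S v & forall w, S w -> w <= v.
Proof.
move=> Hall [v0 Sv0] HS.
have [allz|] := pselect (forall v, S v -> v = 0).
  by exists v0 => // w /allz ->; rewrite (allz _ Sv0).
move=> /existsNP[s /not_implyP[Ss sn0]].
have [|[l [hl sl]]] := HS s Ss; first by [].
have [t [t0 Ht]] := @exists_t fs Hall.
have s0 : 0 < s.
  have [p0 _] := @prod_bound fs t t0 Hall Ht l hl.
  by rewrite lt_neqAle eq_sym; apply/andP; split; [apply/eqP|rewrite sl].
set N := Num.Def.archi_bound (s^-1 / t).
have HN : s^-1 / t < N%:R by apply: archi_boundP; rewrite divr_ge0 // ltW // invr_gt0.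
have key : forall w, S w -> s <= w -> w \in LN fs N.
  move=> w Sw sw; have [w0|[l' [hl' wl']]] := HS w Sw.
    by move: sw; rewrite w0 => /(lt_le_trans s0); rewrite ltxx.
  rewrite wl'; apply: LN_mem => //; rewrite leqNgt; apply/negP => hN.
  have [p0 p1] := @prod_bound fs t t0 Hall Ht l' hl'.
  rewrite -wl' in p0 p1.
  have hk : (N%:R : R) <= (size l')%:R by rewrite ler_nat ltnW.
  have : s^-1 < N%:R * t by rewrite -ltr_pdivrMr.
  rewrite -(ltr_pM2l s0) mulrV ?unitfE ?gt_eqF // => h1.
  have hw : s * (1 + (size l')%:R * t) <= w * (1 + (size l')%:R * t).
    by rewrite ler_pM2r // ltr_wpDr // mulr_ge0 // ltW.
  have h2 : s * (N%:R * t) <= s * ((size l')%:R * t).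
    by rewrite ler_pM2l // ler_pM2r.
  move: hw h2 h1 p1; rewrite !mulrDr !mulr1; lra.
set L' := [seq v <- LN fs N | `[< S v /\ s <= v >]].
have sL : s \in L'.
  rewrite mem_filter; apply/andP; split; first by apply/asboolP; split.
  exact: key.
move: sL; case E: L' => [//|x xs] _.
have [m hm1 hm2] := list_max xs x.
have hmL : m \in L' by rewrite E.
move: hmL; rewrite mem_filter => /andP[/asboolP[Sm sm] _].
exists m => // w Sw.
case: (leP s w) => hsw; last by exact: (le_trans (ltW hsw) sm).
apply: hm2; rewrite -E mem_filter; apply/andP; split; first by apply/asboolP.
exact: key.
Qed.

Lemma In_mem (T : eqType) (x : T) s : List.In x s -> x \in s.
Proof. by elim: s => //= y s IH [->|/IH h]; rewrite inE ?eqxx ?h ?orbT. Qed.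

Lemma inF1 fs : inF fs 1.
Proof. by right; exists [::]; rewrite big_nil. Qed.

Lemma lmin_inF fs (s : seq R) : (forall v, v \in s -> inF fs v) -> inF fs (lmin s).
Proof.
elim: s => [|x s IH] H /=; first exact: inF1.
rewrite minEle; case: ifP => _; first by apply: H; rewrite inE eqxx.
by apply: IH => v hv; apply: H; rewrite inE hv orbT.
Qed.

Lemma lmin_map_inF fs (T : Type) (F : T -> R) (b : seq T) :
  (forall a, inF fs (F a)) -> inF fs (lmin (map F b)).
Proof.
move=> H; apply: lmin_inF; elim: b => //= a b IH v.
by rewrite inE => /orP[/eqP->|/IH].
Qed.

Lemma mul_inF fs f v : inF fs v -> 0 < f <= 1 -> (f < 1 -> f \in fs) -> inF fs (f * v).
Proof.
move=> [->|[l [hl ->]]] /andP[f0 f1] hf; first by left; rewrite mulr0.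
move: f1; rewrite le_eqVlt => /orP[/eqP->|/hf hf']; first by rewrite mul1r; right; exists l.
by right; exists (f :: l); rewrite big_cons /= hf' hl.
Qed.
End Aux.

Lemma repr_tuple (VAR : eqType) (D : Type) (HVARinf : exists g : nat -> VAR, injective g)
  (HD : inhabited D) n (d : n.-tuple D) :
  exists (beta : VAR -> D) (y : n.-tuple VAR), uniq y /\ d = map_tuple beta y.
Proof.
case: HVARinf => g ig; case: HD => d0.
have sz : size (map g (iota 0 n)) == n by rewrite size_map size_iota.
set y := Tuple sz.
have uy : uniq y by rewrite /= map_inj_uniq // iota_uniq.
exists (fun v => nth d0 d (index v y)), y; split => //.
apply: val_inj => /=; apply: (@eq_from_nth _ d0).
  by rewrite size_map size_tuple size_map size_iota.
move=> j; rewrite size_tuple => hj.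
rewrite (nth_map (g 0)) ?size_map ?size_iota //.
by rewrite (index_uniq (g 0)) // size_map size_iota.
Qed.
Unset Implicit Arguments.

Theorem lemma1
  (R : realType)
  (* the constraint language L *)
  (VAR : eqType) (Constr : Type) (V : Constr -> seq VAR)
  (crename : (VAR -> VAR) -> Constr -> Constr)
  (HVARinf : exists g : nat -> VAR, injective g)
  (* the L-interpretation I: domain D, assignments VAR -> D, solutions sem *)
  (D : Type) (HD : inhabited D) (sem : Constr -> (VAR -> D) -> Prop)
  (Hloc : forall phi (alpha beta : VAR -> D),
      sem phi alpha -> {in V phi, alpha =1 beta} -> sem phi beta)
  (HrenV : forall rho phi, renaming rho -> V (crename rho phi) =i map rho (V phi))
  (Hrensem : forall rho phi (alpha : VAR -> D), renaming rho ->
      sem (crename rho phi) alpha <-> sem phi (alpha \o rho))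
  (* the relation symbols of R(L) *)
  (Rel : Type) (arity : Rel -> nat)
  (* the specification P_F *)
  (P : seq (qclause R VAR Constr arity)) (HP : qdc_spec P)
  (* the chain *)
  (A : nat -> interp R arity D)
  (HA : forall i, fuzzy_interp (A i))
  (Hchain : is_chain P crename sem A) :
  forall (r : Rel) (alpha : VAR -> D) (x : (arity r).-tuple VAR),
  exists m : nat,
    union_interp A r (map_tuple alpha x) = A m r (map_tuple alpha x).
Proof.
move=> r alpha x.
set fs := [seq f <- [seq cl_factor c | c <- P] | (0 < f) && (f < 1)].
have Hall : all (fun f => (0 < f) && (f < 1)) fs.
  by apply/allP => f; rewrite mem_filter => /andP[].
have inP : forall c, List.In c P -> cl_factor c \in [seq cl_factor c | c <- P].
  move=> c; elim: (P) => //= c' P' IH [->|h]; rewrite inE ?eqxx // IH ?orbT //.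
have HF : forall i r' d, inF fs (A i r' d).
  elim=> [|i IH] r' d; have [beta [y [uy ->]]] := repr_tuple HVARinf HD d.
    by left; apply: Hchain.1.
  case: (Hchain.2 i r' beta y uy) => [[_ ->]|[[c [rho [hc [_ [_ _ _ ->]]]]] _]].
    by left.
  have [_ hf _] := HP c hc.
  apply: mul_inF => //=.
    by apply: lmin_map_inF => a; apply: IH.
  move=> f1; rewrite mem_filter f1 andbT; case/andP: hf => -> _ /=; exact: inP.
set S := [set A i r (map_tuple alpha x) | i in [set: nat]].
have S0 : S !=set0 by exists (A 0%N r (map_tuple alpha x)); exists 0%N.
have HS : forall v, S v -> inF fs v by move=> v [i _ <-]; apply: HF.
have [v [m _ <-] hub] := sup_attained Hall S0 HS.
exists m; rewrite /union_interp -/S; apply/le_anti/andP; split.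
  by apply: ge_sup => // w /hub.
apply: sup_upper_bound; last by exists m.
by split => //; exists (A m r (map_tuple alpha x)) => w /hub.
Qed.
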